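(* Let $f\colon G\to G$ and $g\colon G'\to G'$ be continuous maps of graphs, and let $E\subseteq G$ be a closed set with $f(E)\subseteq E$. Suppose $\varphi\colon G\to G'$ is a semi-conjugacy between $f$ and $g$ which is an almost conjugacy between $f|_E$ and $g$. If $g$ is an irrational rotation of the circle (so $G'$ is a circle), then $f$ has no scrambled pair.
   Context: A graph is a non-degenerate compact connected metric space containing a finite subset $V$ such that each connected component of the complement of $V$ is homeomorphic to an open interval. A continuous map $\varphi\colon G\to G'$ is a semi-conjugacy between $f$ and $g$ if $\varphi$ is onto and $\varphi\circ f=g\circ\varphi$. If $E\subseteq G$ is closed with $f(E)\subseteq E$, such a semi-conjugacy is an almost conjugacy between $f|_E$ and $g$ if: $\varphi(E)=G'$; for every $y\in G'$, $\varphi^{-1}(y)$ is connected; for every $y\in G'$, $\varphi^{-1}(y)\cap E=\partial\varphi^{-1}(y)$ (boundary in $G$); and there is $N\ge1$ such that $\varphi^{-1}(y)\cap E$ has at most $N$ elements for every $y\in G'$. A pair $(x,y)$ is scrambled if $\liminf_{n\to\infty}d(f^n(x),f^n(y))=0$ and $\limsup_{n\to\infty}d(f^n(x),f^n(y))>0$. *)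

(* Defs.v *)
From HB Require Import structures.
From mathcomp Require Import all_boot all_order all_algebra.
From mathcomp Require Import all_classical all_reals all_analysis.
Set Implicit Arguments. Unset Strict Implicit. Unset Printing Implicit Defensive.
Import Order.TTheory GRing.Theory Num.Theory.
Import numFieldNormedType.Exports.
Local Open Scope classical_set_scope.
Local Open Scope ring_scope.

Definition homeo_onto {S T : topologicalType} (A : set S) (B : set T)
  (h : S -> T) (k : T -> S) : Prop :=
  [/\ {within A, continuous h} /\ {within B, continuous k},
      h @` A `<=` B, k @` B `<=` A,
      (forall x, A x -> k (h x) = x) & (forall y, B y -> h (k y) = y)].

Definition is_graph (R : realType) (G : metricType R) : Prop :=
  [/\ exists x y : G, x <> y,
      compact [set: G],
      connected [set: G] &
      exists V : set G, finite_set V /\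
        forall x : G, ~ V x ->
          exists (h : R -> G) (k : G -> R),
            homeo_onto (`]0%R, 1%R[%classic : set R) (connected_component (~` V) x) h k].

Definition boundary {T : topologicalType} (A : set T) : set T :=
  closure A `\` interior A.

Definition semi_conjugacy {T U : topologicalType} (f : T -> T) (g : U -> U)
  (phi : T -> U) : Prop :=
  [/\ continuous phi, (forall y, exists x, phi x = y) & phi \o f = g \o phi].

Definition almost_conjugacy {T U : topologicalType} (E : set T)
  (phi : T -> U) : Prop :=
  [/\ phi @` E = [set: U],
      (forall y, connected (phi @^-1` [set y])),
      (forall y, phi @^-1` [set y] `&` E = boundary (phi @^-1` [set y])) &
      exists N : nat, (1 <= N)%N /\
        forall y, ((phi @^-1` [set y] `&` E) #<= `I_N)%card].

(* g is (topologically conjugate to) an irrational rotation of the circle: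
   there is a continuous surjection p : R -> G' whose fibres are exactly the
   cosets of Z (so p induces a homeomorphism R/Z ~ G', G' being compact
   Hausdorff) and an irrational alpha with g (p x) = p (x + alpha). *)
Definition irrational_rotation (R : realType) (G' : metricType R)
  (g : G' -> G') : Prop :=
  exists (p : R -> G') (alpha : R),
    [/\ continuous p,
        (forall y, exists x, p x = y),
        (forall x y, p x = p y <-> exists k : int, x - y = k%:~R),
        (forall q : rat, alpha <> ratr q) &
        (forall x, g (p x) = p (x + alpha))].

Definition scrambled (R : realType) (G : metricType R) (f : G -> G)
  (x y : G) : Prop :=
  limn_einf (fun n => (mdist (iter n f x) (iter n f y))%:E) = 0%E /\
  (0 < limn_esup (fun n => (mdist (iter n f x) (iter n f y))%:E))%E.

(* Main.v *)
Require Import Defs.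
From mathcomp Require Import all_boot all_order all_algebra.
From mathcomp Require Import all_classical all_reals all_analysis.
From mathcomp Require Import ring lra.
Local Open Scope classical_set_scope.

Section helpers_sec.
Set Implicit Arguments. Unset Strict Implicit. Unset Printing Implicit Defensive.
Import Order.TTheory GRing.Theory Num.Theory.
Import numFieldNormedType.Exports.
Local Open Scope ring_scope.

Section helpers.
Context {R : realType}.

Lemma minl (a b : R) : Num.min a b <= a. Proof. by rewrite ge_min lexx. Qed.
Lemma minr (a b : R) : Num.min a b <= b. Proof. by rewrite ge_min lexx orbT. Qed.

Lemma cluster_step (T : pseudoMetricType R) (A : set T) (cA : compact A)
  (P : R -> nat -> Prop)
  (Pmono : forall d1 d2 n, d1 <= d2 -> P d1 n -> P d2 n)
  (Pfreq : forall d m, 0 < d -> exists n, (m <= n)%N /\ P d n)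
  (z : nat -> T) (zA : forall n, A (z n)) :
  exists t, A t /\ forall d m, 0 < d ->
     exists n, (m <= n)%N /\ P d n /\ ball t d (z n).
Proof.
pose F : set_system T := fun B => exists d m, 0 < d /\
  forall n, (m <= n)%N -> P d n -> B (z n).
have FF : ProperFilter F.
  split.
    move=> [d [m [d0 H]]]; have [n [mn Pn]] := Pfreq d m d0.
    exact: (H n mn Pn).
  split.
  - by exists 1, 0%N; split => //.
  - move=> B1 B2 [d1 [m1 [d10 H1]]] [d2 [m2 [d20 H2]]].
    exists (Num.min d1 d2), (maxn m1 m2); split; first by rewrite lt_min d10.
    move=> n mn Pn; split.
      by apply: H1; [apply: leq_trans mn; apply: leq_maxl|
        apply: Pmono Pn; rewrite ge_min lexx].
    by apply: H2; [apply: leq_trans mn; apply: leq_maxr|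
        apply: Pmono Pn; rewrite ge_min lexx orbT].
  - move=> B1 B2 sB [d [m [d0 H]]]; exists d, m; split => // n mn Pn.
    exact/sB/H.
have FA : F A by exists 1, 0%N; split.
have [t [At clt]] := cA F FF FA.
exists t; split => // d m d0.
have FB : F [set z n | n in [set n | (m <= n)%N /\ P d n]].
  by exists d, m; split => // n mn Pn; exists n.
have [_ [[n [mn Pn] <-] bn]] := clt _ _ FB (nbhsx_ballx t d d0).
by exists n.
Qed.


Lemma cont_ball (T : pseudoMetricType R) (U : pseudoMetricType R) (k : T -> U) t :
  {for t, continuous k} -> forall e, 0 < e ->
  exists2 d, 0 < d & forall y, ball t d y -> ball (k t) e (k y).
Proof.
move=> ck e e0; have := ck _ (nbhsx_ballx (k t) e e0).
by move=> /nbhs_ballP[d d0 H]; exists d => // y /H.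
Qed.

Lemma lim_eq (T1 T2 : pseudoMetricType R) (U : metricType R)
  (k1 : T1 -> U) (k2 : T2 -> U) t1 t2 (w1 : nat -> T1) (w2 : nat -> T2) :
  {for t1, continuous k1} -> {for t2, continuous k2} ->
  (forall d, 0 < d -> exists n, ball t1 d (w1 n) /\ ball t2 d (w2 n) /\
     k1 (w1 n) = k2 (w2 n)) -> k1 t1 = k2 t2.
Proof.
move=> c1 c2 H; apply: contrapT => neq.
have e0 : 0 < mdist (k1 t1) (k2 t2) / 2.
  by rewrite divr_gt0 // mdist_gt0; apply/eqP.
have [d1 d10 H1] := cont_ball c1 e0.
have [d2 d20 H2] := cont_ball c2 e0.
have dd0 : 0 < Num.min d1 d2 by rewrite lt_min d10 d20.
have [n [b1 [b2 E]]] := H (Num.min d1 d2) dd0.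
have := H1 _ (le_ball (minl _ _) b1).
have := H2 _ (le_ball (minr _ _) b2).
rewrite !ballEmdist /= -E => h2 h1.
have := metric_triangle (k1 t1) (k1 (w1 n)) (k2 t2).
rewrite (metric_sym (k1 (w1 n))) => h.
have := lt_le_trans (ltrD h1 h2) (lexx _).
move=> h3; have := le_lt_trans h h3; rewrite -splitr ltxx //.
Qed.


Lemma einf0_freq (u : nat -> R) :
  limn_einf (fun n => (u n)%:E) = 0%E ->
  forall d m, 0 < d -> exists n, (m <= n)%N /\ u n < d.
Proof.
move=> H d m d0.
have : (einfs (fun n => (u n)%:E) m <= 0)%E.
  rewrite -H limn_einf_lim; apply: lime_ge; first exact: is_cvg_einfs.
  by exists m => // n /= mn; apply: nondecreasing_einfs.
have d0' : (0 < d%:E)%E by rewrite lte_fin.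
move=> /le_lt_trans /(_ d0').
move=> /ereal_inf_lt [_ [n /= mn <-]]; rewrite lte_fin => h.
by exists n.
Qed.

Lemma esup_pos_freq (u : nat -> R) :
  (0 < limn_esup (fun n => (u n)%:E))%E ->
  exists2 e, 0 < e & forall m, exists n, (m <= n)%N /\ e <= u n.
Proof.
move=> H.
have [e e0 eL] : exists2 e, 0 < e & (e%:E < limn_esup (fun n => (u n)%:E))%E.
  move: H; case: (limn_esup _) => [r||] //.
  - rewrite lte_fin => r0; exists (r / 2); first by rewrite divr_gt0.
    by rewrite lte_fin ltr_pdivrMr // ltr_pMr // ltr1n.
  - by move=> _; exists 1 => //; rewrite ltry.
exists e => // m.
have : (limn_esup (fun n => (u n)%:E) <= esups (fun n => (u n)%:E) m)%E.
  rewrite limn_esup_lim; apply: lime_le; first exact: is_cvg_esups.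
  by exists m => // n /= mn; apply: nonincreasing_esups.
move=> /(lt_le_trans eL) /ereal_sup_gt [_ [n /= mn <-]]; rewrite lte_fin => h.
by exists n; split => //; apply: ltW.
Qed.


Lemma mdist_cont (T : metricType R) (a : T) : continuous (fun c : T => mdist a c).
Proof.
move=> c B /nbhs_ballP[e e0 sB]; apply/nbhs_ballP; exists e => // y.
rewrite ballEmdist /= => cy; apply: sB.
rewrite -ball_normE /= ltr_distlC.
have h1 := metric_triangle a c y.
have h2 := metric_triangle a y c.
rewrite (metric_sym y c) in h2.
apply/andP; split.
  by rewrite ltrBlDr; apply: le_lt_trans h2 _; rewrite ltrD2l.
by apply: le_lt_trans h1 _; rewrite ltrD2l.
Qed.

Lemma ivt_conn (T : metricType R) (F : set T) a b :
  connected F -> F a -> F b -> forall t, 0 <= t <= mdist a b ->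
  exists c, F c /\ mdist a c = t.
Proof.
move=> cF Fa Fb t tab.
have : connected ((fun c => mdist a c) @` F).
  apply: connected_continuous_connected => //.
  exact/continuous_subspaceT/mdist_cont.
move=> /connected_intervalP iF.
have := iF 0 (mdist a b); rewrite /=.
move=> /(_ _ _ t tab) [].
- by exists a => //; rewrite mdistxx.
- by exists b.
- by move=> c Fc <-; exists c.
Qed.


Lemma multi_cluster (T : pseudoMetricType R) (cT : compact [set: T])
  (P : R -> nat -> Prop)
  (Pmono : forall d1 d2 n, d1 <= d2 -> P d1 n -> P d2 n)
  (Pfreq : forall d m, 0 < d -> exists n, (m <= n)%N /\ P d n)
  (c : nat -> nat -> T) k :
  exists t : nat -> T, forall d m, 0 < d -> exists n, (m <= n)%N /\ P d n /\
    forall j, (j <= k)%N -> ball (t j) d (c j n).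
Proof.
elim: k => [|k [t Ht]].
  have [t0 [_ H]] := cluster_step cT Pmono Pfreq (z := c 0%N) (fun _ => I).
  exists (fun _ => t0) => d m d0; have [n [mn [Pn bn]]] := H d m d0.
  by exists n; split => //; split => // j; rewrite leqn0 => /eqP ->.
pose P' d n := P d n /\ forall j, (j <= k)%N -> ball (t j) d (c j n).
have P'mono : forall d1 d2 n, d1 <= d2 -> P' d1 n -> P' d2 n.
  move=> d1 d2 n d12 [Pn Bn]; split; first exact: Pmono Pn.
  by move=> j jk; apply: le_ball d12 _ (Bn j jk).
have P'freq : forall d m, 0 < d -> exists n, (m <= n)%N /\ P' d n.
  by move=> d m d0; have [n [mn [Pn Bn]]] := Ht d m d0; exists n.
have [t' [_ H]] := cluster_step cT P'mono P'freq (z := c k.+1) (fun _ => I).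
exists (fun j => if j == k.+1 then t' else t j) => d m d0.
have [n [mn [[Pn Bn] bn]]] := H d m d0.
exists n; split => //; split => // j; rewrite leq_eqVlt => /orP[/eqP ->|jk].
  by rewrite eqxx.
by rewrite ltn_eqF //; apply: Bn.
Qed.


Lemma card_contra (T : Type) (S : set T) N (t : nat -> T) :
  (S #<= `I_N)%card -> (forall j, (j <= N)%N -> S (t j)) ->
  {in `I_N.+1 &, injective t} -> False.
Proof.
move=> SN St tinj.
have sub : t @` `I_N.+1 `<=` S by move=> _ [j /= jN <-]; apply: St.
clear St; move: tinj => /Pinj[t' ->] in sub *.
have := card_le_trans (subset_card_le sub) SN.
rewrite (card_le_eql (inj_card_eq _)); last exact: inj.
by rewrite card_le_II ltnn.
Qed.


Lemma main_aux (G G' : metricType R)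
  (f : G -> G) (g : G' -> G') (E : set G) (phi : G -> G') :
  is_graph G -> is_graph G' ->
  continuous f -> continuous g ->
  closed E -> f @` E `<=` E ->
  semi_conjugacy f g phi ->
  almost_conjugacy E phi ->
  irrational_rotation g ->
  forall x y : G, ~ scrambled f x y.
Proof.
move=> [_ cG _ _] _ fc gc Ec fE [phic phis phicomm] [_ fconn bdry [N [N1 card]]]
  [p [al [pc ps pfib alirr gp]]] x y [H1 H2].
have phif u : phi (f u) = g (phi u) by have := congr1 (fun h => h u) phicomm.
have phiiter n u : phi (iter n f u) = iter n g (phi u).
  by elim: n => [//|n IH]; rewrite !iterS phif IH.
have giter n r : iter n g (p r) = p (r + n%:R * al).
  elim: n => [|n IH]; first by rewrite mul0r addr0.
  by rewrite iterS IH gp -addrA -[in n.+1%:R]addn1 natrD mulrDl mul1r.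
have [s ps_] := ps (phi x).
have [s' ps'_] := ps (phi y).
pose a n := iter n f x. pose b n := iter n f y.
pose r n := s + n%:R * al.
have phia n : phi (a n) = p (r n) by rewrite /a phiiter -ps_ giter.
have irr n1 n2 : p (r n1) = p (r n2) -> n1 = n2.
  move=> /pfib [k hk]; apply/eqP; apply: contraT => n12.
  have hk' : (n1%:R - n2%:R) * al = k%:~R.
    by rewrite -hk /r; ring.
  have nz : (n1%:R - n2%:R : R) != 0.
    by rewrite subr_eq0 eqr_nat.
  exfalso; apply: (alirr (k%:Q / (n1%:Q - n2%:Q))).
  rewrite fmorph_div rmorphB /= !ratr_int.
  by rewrite -hk' !pmulrn [(_ - _) * al]mulrC mulfK.

have [exy|nexy] := pselect (phi x = phi y); last first.
  have Pfreq := einf0_freq H1.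
  have Pmono : forall d1 d2 n, d1 <= d2 -> mdist (a n) (b n) < d1 -> mdist (a n) (b n) < d2.
    by move=> d1 d2 n d12 h; apply: lt_le_trans d12.
  have [u [_ Hu]] := cluster_step cG Pmono Pfreq (z := a) (fun _ => I).
  pose th n := r n - (Num.floor (r n))%:~R.
  have thA n : `[0, 1]%classic (th n).
    have h1 := real_floor_le (num_real (r n)).
    have h2 := real_floorD1_gt (num_real (r n)).
    rewrite intrD in h2.
    rewrite /= in_itv /= /th; apply/andP; split; lra.
  pose P1 d n := mdist (a n) (b n) < d /\ ball u d (a n).
  have P1mono : forall d1 d2 n, d1 <= d2 -> P1 d1 n -> P1 d2 n.
    move=> d1 d2 n d12 [h1 h2]; split; first exact: lt_le_trans d12.
    exact: le_ball d12 _ h2.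
  have P1freq : forall d m, 0 < d -> exists n, (m <= n)%N /\ P1 d n.
    by move=> d m d0; have [n [mn [h1 h2]]] := Hu d m d0; exists n.
  have [th0 [_ Hth]] := cluster_step (@segment_compact R 0 1) P1mono P1freq thA.
  have phia' n : phi (a n) = p (th n).
    by rewrite phia; apply/pfib; exists (Num.floor (r n)); rewrite /th; ring.
  have phib' n : phi (b n) = p (th n + (s' - s)).
    rewrite /b phiiter -ps'_ giter; apply/pfib; exists (Num.floor (r n)).
    by rewrite /th /r; ring.
  have e1 : phi u = p th0.
    apply: (lim_eq (phic u) (pc th0) (w1 := a) (w2 := th)) => d d0.
    have [n [_ [[_ bu] bth]]] := Hth d 0%N d0.
    by exists n; split => //; split => //; apply: phia'.
  have e2 : phi u = p (th0 + (s' - s)).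
    apply: (lim_eq (phic u) (pc (th0 + (s' - s))) (w1 := b)
      (w2 := fun n => th n + (s' - s))) => d d0.
    have d20 : 0 < d / 2 by rewrite divr_gt0.
    have [n [_ [[abn bu] bth]]] := Hth (d / 2) 0%N d20.
    exists n; split; last split; last exact: phib'.
      have abn' : ball (a n) (d / 2) (b n) by rewrite ballEmdist.
      by have := ball_triangle bu abn'; rewrite -splitr.
    move: bth; rewrite -!ball_normE /=.
    have -> : th0 + (s' - s) - (th n + (s' - s)) = th0 - th n by ring.
    move=> h.
    by apply: lt_le_trans h _; rewrite ler_pdivrMr // ler_pMr // ler1n.
  move: e1; rewrite e2 => /pfib [k hk].
  apply: nexy; rewrite -ps_ -ps'_; apply/pfib; exists (- k).
  rewrite mulrNz -hk; lra.

have [eps eps0 Heps] := esup_pos_freq H2.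
have phib n : phi (b n) = phi (a n) by rewrite /a /b !phiiter exy.
pose tj (j : nat) : R := j%:R * eps / N%:R.
have Npos : (0 : R) < N%:R by rewrite ltr0n.
have tjr j : (j <= N)%N -> 0 <= tj j <= eps.
  move=> jN; rewrite /tj; apply/andP; split.
    by rewrite divr_ge0 // mulr_ge0 // ltW.
  by rewrite ler_pdivrMr // mulrC ler_pM2l // ler_nat.
have cex n j : exists cc, phi cc = phi (a n) /\
    (eps <= mdist (a n) (b n) -> (j <= N)%N -> mdist (a n) cc = tj j).
  have [[h1 h2]|nh] := pselect (eps <= mdist (a n) (b n) /\ (j <= N)%N).
    have /andP[t0 t1] := tjr j h2.
    have Fa : (phi @^-1` [set phi (a n)]) (a n) by [].
    have Fb : (phi @^-1` [set phi (a n)]) (b n) by rewrite /= phib.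
    have tab : 0 <= tj j <= mdist (a n) (b n).
      by rewrite t0 /=; apply: le_trans h1.
    have [cc [Fc dc]] := ivt_conn (fconn (phi (a n))) Fa Fb tab.
    by exists cc.
  by exists (a n); split => // h1 h2; exfalso; apply: nh.
have cex' n : exists fn : nat -> G, forall j, phi (fn j) = phi (a n) /\
    (eps <= mdist (a n) (b n) -> (j <= N)%N -> mdist (a n) (fn j) = tj j).
  by have [fn Hfn] := choice (cex n); exists fn.
have [cf Hcf] := choice cex'.
pose c j n := cf n j.
pose P (d : R) n := eps <= mdist (a n) (b n).
have Pmono : forall d1 d2 n, d1 <= d2 -> P d1 n -> P d2 n by [].
have Pfreq : forall d m, 0 < d -> exists n, (m <= n)%N /\ P d n.
  by move=> d m _; apply: Heps.
have [t Ht] := multi_cluster cG Pmono Pfreq c N.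
have c0 n : P 1 n -> c 0%N n = a n.
  move=> Pn; have := (Hcf n 0%N).2 Pn (leq0n _).
  rewrite /tj mul0r mul0r => /mdist_positivity.
  by move=> ->.
pose w := phi (t 0%N).
have Ft j : (j <= N)%N -> phi (t j) = w.
  move=> jN; apply: (lim_eq (phic (t j)) (phic (t 0%N)) (w1 := c j)
    (w2 := c 0%N)) => d d0.
  have [n [_ [Pn Bn]]] := Ht d 0%N d0.
  exists n; split; first exact: Bn.
  split; first exact: Bn 0%N (leq0n _).
  by rewrite /c (Hcf n j).1 (Hcf n 0%N).1.
have Dt j : (j <= N)%N -> mdist (t 0%N) (t j) = tj j.
  move=> jN.
  have K e : 0 < e -> exists n, [/\ mdist (t 0%N) (a n) < e / 2,
      mdist (t j) (cf n j) < e / 2 & mdist (a n) (cf n j) = tj j].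
    move=> e0; have e20 : 0 < e / 2 by rewrite divr_gt0.
    have [n [_ [Pn Bn]]] := Ht (e / 2) 0%N e20.
    have b0 := Bn 0%N (leq0n _); have bj := Bn j jN.
    rewrite ballEmdist /= in b0; rewrite ballEmdist /= in bj.
    have dj := (Hcf n j).2 Pn jN; have a0 := c0 n Pn.
    rewrite /c in b0 bj a0; rewrite a0 in b0.
    by exists n.
  apply/eqP; rewrite eq_le; apply/andP; split; apply/ler_addgt0Pr => e e0;
    have [n [b0 bj dj]] := K e e0.
    have h1 := metric_triangle (t 0%N) (a n) (t j).
    have h2 := metric_triangle (a n) (cf n j) (t j).
    rewrite (metric_sym (cf n j) (t j)) dj in h2.
    lra.
  have h1 := metric_triangle (a n) (t 0%N) (cf n j).
  have h2 := metric_triangle (t 0%N) (t j) (cf n j).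
  rewrite (metric_sym (a n) (t 0%N)) dj in h1.
  lra.
have Et j : (j <= N)%N -> E (t j).
  move=> jN; have : (phi @^-1` [set w] `&` E) (t j); last by case.
  rewrite bdry; split.
    by apply: subset_closure; rewrite /= Ft.
  move=> /nbhs_ballP [d d0 sd].
  have [n1 [_ [Pn1 Bn1]]] := Ht d 0%N d0.
  have [n2 [n12 [Pn2 Bn2]]] := Ht d n1.+1 d0.
  have h1 := sd _ (Bn1 j jN); have h2 := sd _ (Bn2 j jN).
  rewrite /= /c (Hcf n1 j).1 in h1; rewrite /= /c (Hcf n2 j).1 in h2.
  have := irr n1 n2; rewrite -!phia h1 h2 => /(_ erefl) e.
  by rewrite e ltnn in n12.
apply: (card_contra (card w) (t := t)).
  by move=> j jN; split; [apply: Ft | apply: Et].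
move=> i j /set_mem iN /set_mem jN tij.
rewrite /= ltnS in iN jN.
have := Dt i iN; rewrite tij (Dt j jN) /tj.
have Nn : (N%:R : R)^-1 != 0 by rewrite invr_neq0 // lt0r_neq0.
have en : eps != 0 by rewrite lt0r_neq0.
move=> /(mulIf Nn) /(mulIf en) /eqP; rewrite eqr_nat => /eqP.
by [].
Qed.

End helpers.
End helpers_sec.

Theorem lemma3p1 (R : realType) (G G' : metricType R)
  (f : G -> G) (g : G' -> G') (E : set G) (phi : G -> G') :
  is_graph G -> is_graph G' ->
  continuous f -> continuous g ->
  closed E -> f @` E `<=` E ->
  semi_conjugacy f g phi ->
  almost_conjugacy E phi ->
  irrational_rotation g ->
  forall x y : G, ~ scrambled f x y.
Proof. exact: (@main_aux R G G' f g E phi). Qed.
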